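(* Let $\phi:\Gamma\twoheadrightarrow\Lambda$ be an epimorphism of finite-dimensional algebras and $\mathcal M$ a full subcategory of $\mathrm{mod}(\Gamma)$ which contains $\mathrm{mod}(\Lambda)$. Then (1) the poset $\mathrm{widshad}_{\mathcal M}(\Gamma)$ is a complete lattice, and (2) the maps $(-)\cap\mathcal M:\mathrm{wide}(\Gamma)\to\mathrm{widshad}_{\mathcal M}(\Gamma)$ and $(-)\cap\mathrm{mod}(\Lambda):\mathrm{widshad}_{\mathcal M}(\Gamma)\to\mathrm{wide}(\Lambda)$ are surjective meet-semilattice maps.
   Context: $\mathrm{mod}(\Gamma)$ is the category of finitely generated left $\Gamma$-modules; via $\phi$, $\mathrm{mod}(\Lambda)$ is a full subcategory of $\mathrm{mod}(\Gamma)$. Subcategories are full and closed under isomorphism. A subcategory is wide if it is abelian (closed under kernels and cokernels) and closed under extensions; $\mathrm{wide}(\Gamma)$ is the set of wide subcategories ordered by inclusion. For $\mathcal W\in\mathrm{wide}(\Gamma)$ its $\mathcal M$-wide shadow is $\mathcal W\cap\mathcal M$; $\mathrm{widshad}_{\mathcal M}(\Gamma)$ is the poset of all $\mathcal M$-wide shadows ordered by inclusion. *)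

(* Defs.v *)
(* Finite-dimensional algebras = falgType F over a field F;
   finitely generated (= finite-dimensional) left modules = matrix representations. *)
From HB Require Import structures.
From mathcomp Require Import all_boot all_order all_algebra.
From mathcomp Require Export falgebra.
Set Implicit Arguments. Unset Strict Implicit. Unset Printing Implicit Defensive.
Import GRing.Theory.
Local Open Scope ring_scope.

Section Modules.
Variables (F : fieldType) (A : falgType F).

(* A finitely generated left A-module: F^n (column vectors) with a unital
   algebra action a |-> fact a, acting by v |-> fact a *m v. *)
Record fmod := FMod {
  fdim : nat;
  fact : A -> 'M[F]_fdim;
  fact_linear : linear fact;
  fact_mul : forall a b, fact (a * b) = fact a *m fact b;
  fact_one : fact 1 = 1%:M }.

Definition is_hom (X Y : fmod) (f : 'M[F]_(fdim Y, fdim X)) : Prop :=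
  forall a, f *m fact X a = fact Y a *m f.
Arguments is_hom : clear implicits.

Definition iso (X Y : fmod) : Prop :=
  exists (f : 'M[F]_(fdim Y, fdim X)) (g : 'M[F]_(fdim X, fdim Y)),
    [/\ is_hom X Y f, is_hom Y X g, g *m f = 1%:M & f *m g = 1%:M].
Arguments iso : clear implicits.

(* Subcategories: full, given by a predicate on objects. *)
Definition subcat := fmod -> Prop.
Definition iso_closed (P : subcat) : Prop :=
  forall X Y, iso X Y -> P X -> P Y.

Definition injmx m n (i : 'M[F]_(m, n)) : Prop :=
  forall w : 'cV[F]_n, i *m w = 0 -> w = 0.
Definition surjmx m n (p : 'M[F]_(m, n)) : Prop :=
  forall w : 'cV[F]_m, exists v : 'cV[F]_n, p *m v = w.

Definition is_kernel (X Y : fmod) (f : 'M[F]_(fdim Y, fdim X))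
  (K : fmod) (i : 'M[F]_(fdim X, fdim K)) : Prop :=
  [/\ is_hom K X i, injmx i, f *m i = 0 &
      forall v : 'cV[F]_(fdim X), f *m v = 0 -> exists w, v = i *m w].
Arguments is_kernel : clear implicits.

Definition is_cokernel (X Y : fmod) (f : 'M[F]_(fdim Y, fdim X))
  (C : fmod) (p : 'M[F]_(fdim C, fdim Y)) : Prop :=
  [/\ is_hom Y C p, surjmx p, p *m f = 0 &
      forall v : 'cV[F]_(fdim Y), p *m v = 0 -> exists u, v = f *m u].
Arguments is_cokernel : clear implicits.

Definition short_exact (X E Y : fmod) (i : 'M[F]_(fdim E, fdim X))
  (p : 'M[F]_(fdim Y, fdim E)) : Prop :=
  [/\ is_hom X E i, is_hom E Y p, injmx i, surjmx p &
      p *m i = 0 /\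
      forall v : 'cV[F]_(fdim E), p *m v = 0 -> exists u, v = i *m u].
Arguments short_exact : clear implicits.

Definition kernel_closed (P : subcat) : Prop :=
  forall X Y f, P X -> P Y -> is_hom X Y f ->
  forall K i, is_kernel X Y f K i -> P K.
Definition cokernel_closed (P : subcat) : Prop :=
  forall X Y f, P X -> P Y -> is_hom X Y f ->
  forall C p, is_cokernel X Y f C p -> P C.
Definition extension_closed (P : subcat) : Prop :=
  forall X E Y i p, short_exact X E Y i p ->
  P X -> P Y -> P E.

Definition wide (P : subcat) : Prop :=
  [/\ iso_closed P, kernel_closed P, cokernel_closed P & extension_closed P].

Definition subcat_le (P Q : subcat) : Prop := forall X, P X -> Q X.
Definition subcat_eq (P Q : subcat) : Prop := forall X, P X <-> Q X.
Definition capS (P Q : subcat) : subcat := fun X => P X /\ Q X.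

Definition widshad (M : subcat) (S : subcat) : Prop :=
  exists W, wide W /\ subcat_eq S (capS W M).

End Modules.
Arguments is_hom {F A} X Y f.
Arguments iso {F A} X Y.
Arguments is_kernel {F A} X Y f K i.
Arguments is_cokernel {F A} X Y f C p.
Arguments short_exact {F A} X E Y i p.

Section Posets.
Variables (F : fieldType) (A : falgType F).
Implicit Types (D Fam : subcat A -> Prop).

Definition is_lub D Fam (S : subcat A) : Prop :=
  [/\ D S, (forall T, Fam T -> subcat_le T S) &
      forall U, D U -> (forall T, Fam T -> subcat_le T U) -> subcat_le S U].
Definition is_glb D Fam (S : subcat A) : Prop :=
  [/\ D S, (forall T, Fam T -> subcat_le S T) &
      forall U, D U -> (forall T, Fam T -> subcat_le U T) -> subcat_le U S].

Definition complete_lattice D : Prop :=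
  forall Fam, (forall T, Fam T -> D T) ->
  (exists S, is_lub D Fam S) /\ (exists S, is_glb D Fam S).

Definition is_meet D (x y m : subcat A) : Prop :=
  is_glb D (fun z => z = x \/ z = y) m.
End Posets.

Definition meet_map (F : fieldType) (A B : falgType F)
  (D1 : subcat A -> Prop) (D2 : subcat B -> Prop) (f : subcat A -> subcat B) : Prop :=
  (forall x, D1 x -> D2 (f x)) /\
  (forall x y m, D1 x -> D1 y -> is_meet D1 x y m -> is_meet D2 (f x) (f y) (f m)).

Definition surj_map (F : fieldType) (A B : falgType F)
  (D1 : subcat A -> Prop) (D2 : subcat B -> Prop) (f : subcat A -> subcat B) : Prop :=
  forall y, D2 y -> exists x, D1 x /\ subcat_eq (f x) y.

Section Restriction.
Variables (F : fieldType) (Gam Lam : falgType F) (phi : {lrmorphism Gam -> Lam}).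

Lemma res_linear (Y : fmod Lam) : linear (fun a => fact Y (phi a)).
Proof. by move=> k a b /=; rewrite linearP fact_linear. Qed.
Lemma res_mul (Y : fmod Lam) a b :
  fact Y (phi (a * b)) = fact Y (phi a) *m fact Y (phi b).
Proof. by rewrite rmorphM fact_mul. Qed.
Lemma res_one (Y : fmod Lam) : fact Y (phi 1) = 1%:M.
Proof. by rewrite rmorph1 fact_one. Qed.

Definition res (Y : fmod Lam) : fmod Gam :=
  @FMod F Gam (fdim Y) (fun a => fact Y (phi a)) (res_linear Y) (res_mul Y) (res_one Y).

(* mod(Lam) as a full (iso-closed) subcategory of mod(Gam) *)
Definition modL : subcat Gam := fun X => exists Y, iso X (res Y).

(* S |-> S ∩ mod(Lam), viewed as a subcategory of mod(Lam) *)
Definition restrL (S : subcat Gam) : subcat Lam := fun Y => S (res Y).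
End Restriction.

(* Main.v *)
Require Import Defs.
From HB Require Import structures.
From mathcomp Require Import all_boot all_order all_algebra.
From mathcomp Require Import falgebra.
From Stdlib Require Classical.
Set Implicit Arguments. Unset Strict Implicit. Unset Printing Implicit Defensive.
Import GRing.Theory.
Local Open Scope ring_scope.
Section LA.
Variable F : fieldType.

Lemma mx_cV_ext m n (A B : 'M[F]_(m,n)) :
  (forall v : 'cV[F]_n, A *m v = B *m v) -> A = B.
Proof.
move=> H; apply/matrixP => i j.
have := congr1 (fun M : 'cV[F]_m => M i 0) (H (delta_mx j 0)).
by rewrite -!colE !mxE.
Qed.

Lemma inj_linv m n (i : 'M[F]_(m,n)) : injmx i -> exists L : 'M[F]_(n,m), L *m i = 1%:M.
Proof.
move=> Hi.
have : row_free i^T.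
  apply: inj_row_free => v Hv.
  have : i *m v^T = 0 by apply: trmx_inj; rewrite trmx_mul trmxK Hv trmx0.
  by move/Hi => /(congr1 trmx); rewrite trmxK trmx0.
case/row_freeP => B HB; exists B^T.
by apply: trmx_inj; rewrite trmx_mul trmxK HB trmx1.
Qed.

Lemma surj_rinv m n (p : 'M[F]_(m,n)) : surjmx p -> exists R : 'M[F]_(n,m), p *m R = 1%:M.
Proof.
move=> Hp.
have : row_full p^T.
  rewrite -sub1mx; apply/row_subP => j; rewrite row1.
  have [v Hv] := Hp (delta_mx j 0).
  have -> : delta_mx 0 j = v^T *m p^T :> 'rV_m by rewrite -trmx_mul Hv trmx_delta.
  exact: submxMl.
case/row_fullP => B HB; exists B^T.
by apply: trmx_inj; rewrite trmx_mul trmxK HB trmx1.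
Qed.

Lemma linv_inj m n (i : 'M[F]_(m,n)) (L : 'M[F]_(n,m)) : L *m i = 1%:M -> injmx i.
Proof. by move=> H w Hw; rewrite -(mul1mx w) -H -mulmxA Hw mulmx0. Qed.

Lemma rinv_surj m n (p : 'M[F]_(m,n)) (R : 'M[F]_(n,m)) : p *m R = 1%:M -> surjmx p.
Proof. by move=> H w; exists (R *m w); rewrite mulmxA H mul1mx. Qed.

Lemma injmx_le m n (i : 'M[F]_(m,n)) : injmx i -> (n <= m)%N.
Proof.
case/inj_linv => L HL.
by rewrite -[n](mxrank1 F) -HL (leq_trans (mxrankM_maxr _ _)) ?rank_leq_row.
Qed.

Lemma surjmx_le m n (p : 'M[F]_(m,n)) : surjmx p -> (m <= n)%N.
Proof.
case/surj_rinv => R HR.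
by rewrite -[m](mxrank1 F) -HR (leq_trans (mxrankM_maxl _ _)) ?rank_leq_col.
Qed.

Lemma injmx_sq n (i : 'M[F]_n) : injmx i -> surjmx i.
Proof. by case/inj_linv => L /mulmx1C HL; apply: rinv_surj HL. Qed.

Lemma surjmx_sq n (i : 'M[F]_n) : surjmx i -> injmx i.
Proof. by case/surj_rinv => L /mulmx1C HL; apply: linv_inj HL. Qed.

Lemma cV0 n (H : n = 0%N) (w : 'cV[F]_n) : w = 0.
Proof. by subst; apply/matrixP => [[]]. Qed.

Lemma ker_mx m n (f : 'M[F]_(m,n)) : exists k (i : 'M[F]_(n,k)) (L : 'M[F]_(k,n)),
  [/\ L *m i = 1%:M, f *m i = 0 & forall v : 'cV[F]_n, f *m v = 0 -> exists w : 'cV[F]_k, v = i *m w].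
Proof.
set B := row_base (kermx f^T).
have [C HC] := row_freeP (row_base_free (kermx f^T)); rewrite -/B in HC.
exists _, B^T, C^T; split.
- by apply: trmx_inj; rewrite trmx_mul !trmxK trmx1.
- apply: trmx_inj; rewrite trmx_mul trmxK trmx0; apply/sub_kermxP.
  by rewrite eq_row_base.
- move=> v Hv.
  have : (v^T <= B)%MS.
    rewrite eq_row_base; apply/sub_kermxP.
    by rewrite -trmx_mul Hv trmx0.
  case/submxP => D HD; exists D^T.
  by rewrite -[v]trmxK HD trmx_mul.
Qed.

Lemma coker_mx m n (f : 'M[F]_(m,n)) : exists c (p : 'M[F]_(c,m)) (R : 'M[F]_(m,c)),
  [/\ p *m R = 1%:M, p *m f = 0 & forall v : 'cV[F]_m, p *m v = 0 -> exists u : 'cV[F]_n, v = f *m u].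
Proof.
set p := row_base (kermx f).
have [C HC] := row_freeP (row_base_free (kermx f)).
have pf : p *m f = 0 by apply/sub_kermxP; rewrite eq_row_base.
exists _, p, C; split => // v Hv.
have sub1 : (f^T <= kermx p^T)%MS.
  by apply/sub_kermxP; rewrite -trmx_mul pf trmx0.
have rk : (\rank (kermx p^T) <= \rank f^T)%N.
  rewrite mxrank_ker mxrank_tr /p eq_row_base mxrank_ker mxrank_tr.
  by rewrite subKn ?rank_leq_row.
have sub2 : (kermx p^T <= f^T)%MS.
  by move: (mxrank_leqif_sup sub1) => [_ <-]; rewrite eqn_leq rk andbT mxrankS.
have : (v^T <= f^T)%MS.
  apply: submx_trans sub2; apply/sub_kermxP.
  by rewrite -trmx_mul Hv trmx0.
case/submxP => D HD; exists D^T.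
by apply: trmx_inj; rewrite trmx_mul trmxK HD.
Qed.

Lemma inj_nsurj m n (k : 'M[F]_(m,n)) : injmx k -> ~ surjmx k -> (n < m)%N.
Proof.
move=> Ik Sk; have := injmx_le Ik; rewrite leq_eqVlt; case/orP => [/eqP E|//].
by subst; case: Sk; apply: injmx_sq.
Qed.
Lemma surj_ninj m n (k : 'M[F]_(m,n)) : surjmx k -> ~ injmx k -> (m < n)%N.
Proof.
move=> Sk Ik; have := surjmx_le Sk; rewrite leq_eqVlt; case/orP => [/eqP E|//].
by subst; case: Ik; apply: surjmx_sq.
Qed.
Lemma inj0 m n : injmx (0 : 'M[F]_(m,n)) -> n = 0%N.
Proof.
case: n => // n H; have := H (const_mx 1) (mul0mx _ _).
by move/matrixP/(_ ord0 ord0); rewrite !mxE => /eqP; rewrite oner_eq0.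
Qed.

End LA.
Section Mod.
Variables (F : fieldType) (A : falgType F).
Local Notation fmod := (@fmod F A).

Lemma fact0 (X : fmod) : fact X 0 = 0.
Proof.
have := fact_linear X 1 0 0; rewrite scaler0 addr0 scale1r.
by move/esym/(canRL (addrK _)); rewrite subrr.
Qed.
Lemma factD (X : fmod) a b : fact X (a + b) = fact X a + fact X b.
Proof. by have := fact_linear X 1 a b; rewrite !scale1r. Qed.
Lemma factZ (X : fmod) k a : fact X (k *: a) = k *: fact X a.
Proof. by have := fact_linear X k a 0; rewrite addr0 fact0 addr0. Qed.
Lemma factN (X : fmod) a : fact X (- a) = - fact X a.
Proof. by rewrite -scaleN1r factZ scaleN1r. Qed.
Lemma factB (X : fmod) a b : fact X (a - b) = fact X a - fact X b.
Proof. by rewrite factD factN. Qed.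

Lemma hom_comp (X Y Z : fmod) f g : is_hom X Y f -> is_hom Y Z g -> is_hom X Z (g *m f).
Proof. by move=> Hf Hg a; rewrite -mulmxA Hf !mulmxA Hg. Qed.
Lemma hom_id (X : fmod) : is_hom X X 1%:M.
Proof. by move=> a; rewrite mul1mx mulmx1. Qed.
Lemma iso_refl (X : fmod) : iso X X.
Proof. by exists 1%:M, 1%:M; split; rewrite ?mulmx1 //; apply: hom_id. Qed.
Lemma iso_sym (X Y : fmod) : iso X Y -> iso Y X.
Proof. by case=> f [g [? ? ? ?]]; exists g, f; split. Qed.

Lemma inj_cancel m n p (k : 'M[F]_(m,n)) (B C : 'M[F]_(n,p)) :
  injmx k -> k *m B = k *m C -> B = C.
Proof.
move=> Hk E; apply: mx_cV_ext => v; apply/eqP; rewrite -subr_eq0; apply/eqP.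
by apply: Hk; rewrite mulmxBr !mulmxA E subrr.
Qed.
Lemma surj_cancel m n p (k : 'M[F]_(m,n)) (B C : 'M[F]_(p,m)) :
  surjmx k -> B *m k = C *m k -> B = C.
Proof.
case/surj_rinv => R HR E.
by rewrite -(mulmx1 B) -(mulmx1 C) -HR !mulmxA E.
Qed.
Lemma inj_comp m n p (k : 'M[F]_(m,n)) (l : 'M[F]_(n,p)) :
  injmx k -> injmx l -> injmx (k *m l).
Proof. by move=> Hk Hl w; rewrite -mulmxA => /Hk /Hl. Qed.
Lemma surj_comp m n p (k : 'M[F]_(m,n)) (l : 'M[F]_(n,p)) :
  surjmx k -> surjmx l -> surjmx (k *m l).
Proof.
move=> Hk Hl w; have [u <-] := Hk w; have [v <-] := Hl u.
by exists v; rewrite mulmxA.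
Qed.
Lemma mx_neq0 m n (f : 'M[F]_(m,n)) : f != 0 -> exists v : 'cV[F]_n, f *m v != 0.
Proof.
move=> Hf; case: (boolP [exists i, [exists j, f i j != 0]]).
  case/existsP => i /existsP [j Hj]; exists (delta_mx j 0).
  by apply/eqP => /(congr1 (fun M : 'cV[F]_m => M i 0)); rewrite -colE !mxE; apply/eqP.
move=> H; case/eqP: Hf; apply/matrixP => i j; rewrite mxE.
by apply/eqP; apply: contraR H => Hij; apply/existsP; exists i; apply/existsP; exists j.
Qed.
Lemma mx0dim m n (H : m = 0%N) (B C : 'M[F]_(m,n)) : B = C.
Proof. by subst; apply/matrixP => [[]]. Qed.
Lemma mx0dimr m n (H : n = 0%N) (B C : 'M[F]_(m,n)) : B = C.
Proof. by subst; apply/matrixP => ? [[]]. Qed.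

Lemma ker_proj m n k (f : 'M[F]_(m,n)) (i : 'M[F]_(n,k)) L p (B : 'M[F]_(n,p)) :
  (forall v : 'cV[F]_n, f *m v = 0 -> exists w : 'cV[F]_k, v = i *m w) -> L *m i = 1%:M ->
  f *m B = 0 -> i *m (L *m B) = B.
Proof.
move=> Hu HL HB; apply: mx_cV_ext => v.
have [w Hw] : exists w, B *m v = i *m w by apply: Hu; rewrite mulmxA HB mul0mx.
by rewrite -!mulmxA Hw (mulmxA L) HL mul1mx.
Qed.

Lemma coker_proj m n c (f : 'M[F]_(m,n)) (p : 'M[F]_(c,m)) R q (N : 'M[F]_(q,m)) :
  (forall v : 'cV[F]_m, p *m v = 0 -> exists u : 'cV[F]_n, v = f *m u) -> p *m R = 1%:M ->
  N *m f = 0 -> N *m R *m p = N.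
Proof.
move=> Hu HR HN; apply: mx_cV_ext => v.
have [u Hu'] : exists u, R *m (p *m v) - v = f *m u.
  by apply: Hu; rewrite mulmxBr !mulmxA HR mul1mx subrr.
apply/eqP; rewrite -subr_eq0 -!mulmxA -mulmxBr Hu' mulmxA HN mul0mx //.
Qed.

Lemma kernel_exists (X Y : fmod) f : is_hom X Y f -> exists K k, is_kernel X Y f K k.
Proof.
move=> Hf; have [k [i [L [HL Hfi Hu]]]] := ker_mx f.
have inv : forall a, i *m (L *m (fact X a *m i)) = fact X a *m i.
  by move=> a; apply: ker_proj Hu HL _; rewrite mulmxA Hf -mulmxA Hfi mulmx0.
have lin : linear (fun a => L *m fact X a *m i).
  by move=> c a b /=; rewrite fact_linear mulmxDr mulmxDl -scalemxAr -scalemxAl.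
have mul : forall a b, L *m fact X (a * b) *m i = (L *m fact X a *m i) *m (L *m fact X b *m i).
  by move=> a b; rewrite fact_mul -!mulmxA inv.
have one : L *m fact X 1 *m i = 1%:M by rewrite fact_one mulmx1.
exists (@FMod F A k _ lin mul one), i; split => //.
- by move=> a /=; rewrite -!mulmxA inv. 
- exact: linv_inj HL.
Qed.

Lemma cokernel_exists (X Y : fmod) f : is_hom X Y f -> exists C c, is_cokernel X Y f C c.
Proof.
move=> Hf; have [k [p [R [HR Hpf Hu]]]] := coker_mx f.
have inv : forall a, p *m fact Y a *m R *m p = p *m fact Y a.
  by move=> a; apply: coker_proj Hu HR _; rewrite -mulmxA -Hf mulmxA Hpf mul0mx.
have lin : linear (fun a => p *m fact Y a *m R).
  by move=> c a b /=; rewrite fact_linear mulmxDr mulmxDl -scalemxAr -scalemxAl.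
have mul : forall a b, p *m fact Y (a * b) *m R = (p *m fact Y a *m R) *m (p *m fact Y b *m R).
  by move=> a b; rewrite fact_mul !mulmxA inv.
have one : p *m fact Y 1 *m R = 1%:M by rewrite fact_one mulmx1.
exists (@FMod F A k _ lin mul one), p; split => //.
- by move=> a /=; rewrite inv.
- exact: rinv_surj HR.
Qed.

Lemma kerfact (X Y Z : fmod) f K k g :
  is_kernel X Y f K k -> is_hom Z X g -> f *m g = 0 ->
  exists g', is_hom Z K g' /\ g = k *m g'.
Proof.
case=> Hk Hinj Hfk Hu Hg Hfg.
have [L HL] := inj_linv Hinj.
have E : k *m (L *m g) = g by apply: ker_proj Hu HL Hfg.
exists (L *m g); split => // a.
apply: (inj_cancel Hinj).
by rewrite !mulmxA -(mulmxA k L g) E Hg Hk -!mulmxA E.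
Qed.

Lemma cokfact (X Y Z : fmod) f C c g :
  is_cokernel X Y f C c -> is_hom Y Z g -> g *m f = 0 ->
  exists g', is_hom C Z g' /\ g = g' *m c.
Proof.
case=> Hc Hsurj Hcf Hu Hg Hgf.
have [R HR] := surj_rinv Hsurj.
have E : g *m R *m c = g by apply: coker_proj Hu HR Hgf.
exists (g *m R); split => // a.
apply: (surj_cancel Hsurj).
by rewrite -mulmxA -Hc mulmxA E Hg -mulmxA E.
Qed.

Lemma bij_iso (X Y : fmod) f : is_hom X Y f -> injmx f -> surjmx f -> iso X Y.
Proof.
move=> Hf Hi Hs; have [L HL] := inj_linv Hi; have [R HR] := surj_rinv Hs.
have LR : L = R by rewrite -(mulmx1 L) -HR mulmxA HL mul1mx.
subst; exists f, R; split => // a.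
apply: (surj_cancel Hs).
by rewrite -mulmxA -Hf mulmxA HL mul1mx -mulmxA HL mulmx1.
Qed.

Lemma ses_ker (X E Y : fmod) i p : short_exact X E Y i p -> is_kernel E Y p X i.
Proof. by case=> ? ? ? ? [? ?]; split. Qed.
Lemma ses_cok (X E Y : fmod) i p : short_exact X E Y i p -> is_cokernel X E i Y p.
Proof.
by case=> Hi Hp Ii Sp [Hpi Hu]; split.
Qed.
End Mod.
Section Ringel.
Variables (F : fieldType) (A : falgType F).
Local Notation fmod := (@fmod F A).
Variable P : subcat A.
Hypothesis HPker : kernel_closed P.
Hypothesis HPcok : cokernel_closed P.

Definition SS (X : fmod) : Prop :=
  [/\ P X, (0 < fdim X)%N &
      forall K k, P K -> is_hom K X k -> injmx k -> (0 < fdim K)%N -> surjmx k].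

Fixpoint filtn (n : nat) (X : fmod) : Prop :=
  match n with
  | 0 => fdim X = 0%N
  | n'.+1 => exists S1 X' i p, [/\ SS S1, short_exact S1 X X' i p & filtn n' X']
  end.
Definition Filt X := exists n, filtn n X.

Lemma SS_hom X Y f : SS X -> SS Y -> is_hom X Y f -> f != 0 -> injmx f /\ surjmx f.
Proof.
case=> PX _ SX [PY _ SY] Hf f0.
have [K [k Kk]] := kernel_exists Hf.
have PK := HPker PX PY Hf Kk.
case: Kk => Hk Ik fk Uk.
have If : injmx f.
  case: (posnP (fdim K)) => [K0|Kpos].
    move=> v /Uk [w ->]; by rewrite (cV0 K0 w) mulmx0.
  have Sk := SX _ _ PK Hk Ik Kpos.
  case/eqP: f0; apply: (surj_cancel Sk); by rewrite fk mul0mx.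
split => //.
have [C [c Cc]] := cokernel_exists Hf.
have PC := HPcok PX PY Hf Cc.
case: (Cc) => Hc Sc cf Uc.
have [I [j Ij]] := kernel_exists Hc.
have PI := HPker PY PC Hc Ij.
case: Ij => Hj Ij cj Uj.
case: (posnP (fdim I)) => [I0|Ipos].
  have [u fu] := mx_neq0 f0.
  have [w Hw] : exists w, f *m u = j *m w by apply: Uj; rewrite mulmxA cf mul0mx.
  by move: fu; rewrite Hw (cV0 I0 w) mulmx0 eqxx.
have Sj := SY _ _ PI Hj Ij Ipos.
have c0 : c = 0 by apply: (surj_cancel Sj); rewrite cj mul0mx.
move=> v; have [u Hu] : exists u, v = f *m u by apply: Uc; rewrite c0 mul0mx.
by exists u.
Qed.

Lemma iso_dim (X Y : fmod) : iso X Y -> fdim X = fdim Y.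
Proof.
case=> f [g [_ _ gf fg]]; apply/eqP; rewrite eqn_leq.
by rewrite (injmx_le (linv_inj gf)) (injmx_le (linv_inj fg)).
Qed.

Lemma ses_iso (S X X' Y : fmod) i p f g :
  short_exact S X X' i p -> is_hom X Y f -> is_hom Y X g ->
  g *m f = 1%:M -> f *m g = 1%:M -> short_exact S Y X' (f *m i) (p *m g).
Proof.
case=> Hi Hp Ii Sp [pi Up] Hf Hg gf fg; split.
- exact: hom_comp Hi Hf.
- exact: hom_comp Hg Hp.
- exact: (inj_comp (linv_inj gf) Ii).
- exact: (surj_comp Sp (rinv_surj gf)).
- split; first by rewrite mulmxA -(mulmxA p) gf mulmx1.
  move=> v Hv; have [u Hu] : exists u, g *m v = i *m u by apply: Up; rewrite mulmxA.
  by exists u; rewrite -mulmxA -Hu mulmxA fg mul1mx.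
Qed.

Lemma filtn_iso n (X Y : fmod) : iso X Y -> filtn n X -> filtn n Y.
Proof.
case: n => [|n] /= XY.
  by rewrite (iso_dim XY).
case=> S1 [X' [i [p [SS1 ses Fn]]]].
case: XY => f [g [Hf Hg gf fg]].
by exists S1, X', (f *m i), (p *m g); split => //; apply: ses_iso.
Qed.

Lemma Filt_iso (X Y : fmod) : iso X Y -> Filt X -> Filt Y.
Proof. by move=> XY [n Hn]; exists n; apply: filtn_iso XY Hn. Qed.

Lemma ses_of_cok (X Y C : fmod) f c :
  is_hom X Y f -> injmx f -> is_cokernel X Y f C c -> short_exact X Y C f c.
Proof. by move=> Hf If [Hc Sc cf Uc]; split. Qed.

Lemma ses_of_ker (X Y K : fmod) f k :
  is_hom X Y f -> surjmx f -> is_kernel X Y f K k -> short_exact K X Y k f.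
Proof. by move=> Hf Sf [Hk Ik fk Uk]; split. Qed.

Lemma Filt_ext n : forall (X E Y : fmod) i p, short_exact X E Y i p -> filtn n X -> Filt Y -> Filt E.
Proof.
elim: n => [|n IH] X E Y i p ses.
  move=> /= X0 FY; case: (ses) => Hi Hp Ii Sp [pi Up].
  apply: Filt_iso FY; apply: iso_sym; apply: bij_iso Hp _ Sp.
  by move=> v /Up [u ->]; rewrite (cV0 X0 u) mulmx0.
case=> S1 [X' [j [q [SS1 sesX Fn]]]] FY.
case: (ses) => Hi Hp Ii Sp [pi Up].
case: (sesX) => Hj Hq Ij Sq [qj Uq].
have Hij := hom_comp Hj Hi.
have [E' [c Cc]] := cokernel_exists Hij.
have qcok := ses_cok sesX.
have [Hc Sc cij Uc] := Cc.
have [i' [Hi' ci]] : exists i', is_hom X' E' i' /\ c *m i = i' *m q.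
  apply: cokfact qcok (hom_comp Hi Hc) _.
  by rewrite -mulmxA.
have [p' [Hp' pc]] : exists p', is_hom E' Y p' /\ p = p' *m c.
  by apply: cokfact Cc Hp _; rewrite mulmxA pi mul0mx.
have ses' : short_exact X' E' Y i' p'.
  split => //.
  - move=> x' Hx'; have [x Hx] := Sq x'.
    have [s Hs] : exists s, i *m x = (i *m j) *m s.
      by apply: Uc; rewrite mulmxA ci -mulmxA Hx.
    by rewrite -Hx; move: Hs; rewrite -mulmxA => /(inj_cancel Ii) ->; rewrite mulmxA qj mul0mx.
  - move=> w; have [v <-] := Sp w; exists (c *m v); by rewrite mulmxA -pc.
  - split.
      apply: (surj_cancel Sq); rewrite -mulmxA -ci mulmxA -pc pi; by rewrite !mul0mx.
    move=> e' He'; have [e He] := Sc e'.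
    have [x Hx] : exists x, e = i *m x by apply: Up; rewrite pc -mulmxA He.
    by exists (q *m x); rewrite -He Hx !mulmxA ci.
have [m Fm] := IH _ _ _ _ _ ses' Fn FY.
exists m.+1, S1, E', (i *m j), c; split => //.
apply: ses_of_cok => //; exact: inj_comp.
Qed.

Lemma L_lem m : forall (Y : fmod), filtn m Y -> forall (S : fmod) h, SS S -> is_hom S Y h -> h != 0 ->
  injmx h /\ (forall C c, is_cokernel S Y h C c -> Filt C).
Proof.
elim: m => [|m IH] Y FY S h SSS Hh h0.
  by rewrite (mx0dim FY h 0) eqxx in h0.
case: FY => T1 [Y' [t [q [SST sesY FY']]]].
case: (sesY) => Ht Hq It Sq [qt Uq].
have tker := ses_ker sesY; have qcok := ses_cok sesY.
case: (eqVneq (q *m h) 0) => qh.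
  have [h' [Hh' hE]] := kerfact tker Hh qh.
  have h'0 : h' != 0 by apply: contraNneq h0 => E; rewrite hE E mulmx0.
  have [Ih' Sh'] := SS_hom SSS SST Hh' h'0.
  split; first by rewrite hE; exact: inj_comp.
  move=> C c Cc; case: (Cc) => Hc Sc ch Uc.
  have ct : c *m t = 0 by apply: (surj_cancel Sh'); rewrite mul0mx -mulmxA -hE.
  have [c' [Hc' cE]] := cokfact qcok Hc ct.
  exists m; apply: filtn_iso FY'.
  apply: bij_iso Hc' _ _.
    move=> y' Hy'; have [y Hy] := Sq y'.
    have [s Hs] : exists s, y = h *m s by apply: Uc; rewrite cE -mulmxA Hy.
    by rewrite -Hy Hs hE -!mulmxA (mulmxA q) qt mul0mx.
  move=> w; have [y <-] := Sc w; exists (q *m y); by rewrite mulmxA -cE.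
have [Iqh Cqh] := IH _ FY' _ _ SSS (hom_comp Hh Hq) qh.
have Ih : injmx h by move=> w Hw; apply: Iqh; rewrite -mulmxA Hw mulmx0.
split => // C c Cc; case: (Cc) => Hc Sc ch Uc.
have [C' [c' C'c]] := cokernel_exists (hom_comp Hh Hq).
have [m' Fm'] := Cqh _ _ C'c.
case: (C'c) => Hc' Sc' cqh Uc'.
have [r [Hr rE]] : exists r, is_hom C C' r /\ c' *m q = r *m c.
  by apply: cokfact Cc (hom_comp Hq Hc') _; rewrite -mulmxA cqh.
exists m'.+1, T1, C', (c *m t), r; split => //; split.
- exact: hom_comp Ht Hc.
- exact: Hr.
- move=> x Hx.
  have [s Hs] : exists s, t *m x = h *m s by apply: Uc; rewrite mulmxA.
  have : q *m h *m s = 0 by rewrite -mulmxA -Hs mulmxA qt mul0mx.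
  move/Iqh => s0; apply: It; by rewrite Hs s0 mulmx0.
- move=> w; have [y' <-] := Sc' w; have [y <-] := Sq y'.
  by exists (c *m y); rewrite !mulmxA rE.
- split; first by rewrite mulmxA -rE -mulmxA qt mulmx0.
  move=> z Hz; have [y Hy] := Sc z.
  have : c' *m (q *m y) = 0 by rewrite mulmxA rE -mulmxA Hy.
  case/Uc' => u Hu.
  have [x Hx] : exists x, y - h *m u = t *m x.
    by apply: Uq; rewrite mulmxBr Hu mulmxA subrr.
  by exists x; rewrite -Hy -mulmxA -Hx mulmxBr mulmxA ch mul0mx subr0.
Qed.

Lemma main_lem n : forall (X : fmod), filtn n X -> forall (Y : fmod) f, Filt Y -> is_hom X Y f ->
  (forall K k, is_kernel X Y f K k -> Filt K) /\ (forall C c, is_cokernel X Y f C c -> Filt C).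
Proof.
elim: n => [|n IH] X FX Y f FY Hf.
  split.
    move=> K k [Hk Ik fk Uk]; exists 0%N => /=.
    by apply/eqP; rewrite -leqn0 -FX; apply: injmx_le Ik.
  move=> C c [Hc Sc cf Uc]; apply: Filt_iso FY; apply: bij_iso Hc _ Sc.
  by move=> v /Uc [u ->]; rewrite (cV0 FX u) mulmx0.
case: FX => S1 [X' [i [q [SS1 sesX FX']]]].
case: (sesX) => Hi Hq Ii Sq [qi Uq].
have qcok := ses_cok sesX.
case: (eqVneq (f *m i) 0) => fi.
  have [g [Hg fE]] := cokfact qcok Hf fi.
  have [IHk IHc] := IH _ FX' _ _ FY Hg.
  split.
    move=> K k Kk; case: (Kk) => Hk Ik fk Uk.
    have [K' [k' K'k]] := kernel_exists Hg.
    have [m' Fm'] := IHk _ _ K'k.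
    case: (K'k) => Hk' Ik' gk' Uk'.
    have [i' [Hi' iE]] := kerfact Kk Hi fi.
    have [r [Hr rE]] : exists r, is_hom K K' r /\ q *m k = k' *m r.
      by apply: kerfact K'k (hom_comp Hk Hq) _; rewrite mulmxA -fE fk.
    exists m'.+1, S1, K', i', r; split => //; split => //.
    - by move=> w Hw; apply: Ii; rewrite iE -mulmxA Hw mulmx0.
    - move=> w'; have [x Hx] := Sq (k' *m w').
      have [w Hw] : exists w, x = k *m w.
        by apply: Uk; rewrite fE -mulmxA Hx mulmxA gk' mul0mx.
      by exists w; apply: (inj_cancel Ik'); rewrite mulmxA -rE -mulmxA -Hw Hx.
    - split.
        by apply: (inj_cancel Ik'); rewrite mulmxA -rE -mulmxA -iE qi mulmx0.
      move=> w Hw.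
      have : q *m (k *m w) = 0 by rewrite mulmxA rE -mulmxA Hw mulmx0.
      case/Uq => s Hs; exists s; apply: (inj_cancel Ik).
      by rewrite Hs iE mulmxA.
  move=> C c [Hc Sc cf Uc]; apply: IHc; split => //.
    by apply: (surj_cancel Sq); rewrite mul0mx -mulmxA -fE.
  by move=> v /Uc [u ->]; exists (q *m u); rewrite fE mulmxA.
have [Ym FYm] := FY.
have [Ifi Cfi] := L_lem FYm SS1 (hom_comp Hi Hf) fi.
have [C1 [c1 C1c]] := cokernel_exists (hom_comp Hi Hf).
have FC1 := Cfi _ _ C1c.
case: (C1c) => Hc1 Sc1 c1fi Uc1.
have [f' [Hf' f'E]] : exists f', is_hom X' C1 f' /\ c1 *m f = f' *m q.
  by apply: cokfact qcok (hom_comp Hf Hc1) _; rewrite -mulmxA c1fi.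
have [IHk IHc] := IH _ FX' _ _ FC1 Hf'.
split.
  move=> K k Kk; case: (Kk) => Hk Ik fk Uk.
  have [K'' [k'' K''k]] := kernel_exists Hf'.
  have FK'' := IHk _ _ K''k.
  case: (K''k) => Hk'' Ik'' f'k'' Uk''.
  have [r [Hr rE]] : exists r, is_hom K K'' r /\ q *m k = k'' *m r.
    by apply: kerfact K''k (hom_comp Hk Hq) _; rewrite mulmxA -f'E -mulmxA fk mulmx0.
  apply: Filt_iso FK''; apply: iso_sym; apply: bij_iso Hr _ _.
    move=> w Hw.
    have : q *m (k *m w) = 0 by rewrite mulmxA rE -mulmxA Hw mulmx0.
    case/Uq => s Hs.
    have : f *m i *m s = 0 by rewrite -mulmxA -Hs mulmxA fk mul0mx.
    move/Ifi => s0; apply: Ik; by rewrite Hs s0 mulmx0.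
  move=> u''; have [x Hx] := Sq (k'' *m u'').
  have : c1 *m (f *m x) = 0 by rewrite mulmxA f'E -mulmxA Hx mulmxA f'k'' mul0mx.
  case/Uc1 => s Hs.
  have [w Hw] : exists w, x - i *m s = k *m w.
    by apply: Uk; rewrite mulmxBr Hs mulmxA subrr.
  exists w; apply: (inj_cancel Ik'').
  by rewrite mulmxA -rE -mulmxA -Hw mulmxBr mulmxA qi mul0mx subr0 Hx.
move=> C c0 Cc; case: (Cc) => Hc0 Sc0 c0f Uc0.
have [c0' [Hc0' c0E]] : exists c0', is_hom C1 C c0' /\ c0 = c0' *m c1.
  by apply: cokfact C1c Hc0 _; rewrite mulmxA c0f mul0mx.
apply: IHc; split => //.
- move=> w; have [v <-] := Sc0 w; exists (c1 *m v); by rewrite mulmxA -c0E.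
- by apply: (surj_cancel Sq); rewrite mul0mx -mulmxA -f'E mulmxA -c0E c0f.
- move=> v Hv; have [y Hy] := Sc1 v.
  have : c0 *m y = 0 by rewrite c0E -mulmxA Hy.
  case/Uc0 => u Hu; exists (q *m u).
  by rewrite mulmxA -f'E -mulmxA -Hu Hy.
Qed.

Lemma Filt_wide : wide Filt.
Proof.
split.
- by move=> X Y XY; apply: Filt_iso.
- move=> X Y f [n Fn] FY Hf K k Kk; exact: (main_lem Fn FY Hf).1 _ _ Kk.
- move=> X Y f [n Fn] FY Hf C c Cc; exact: (main_lem Fn FY Hf).2 _ _ Cc.
- by move=> X E Y i p ses [n Fn] FY; apply: Filt_ext ses Fn FY.
Qed.
Lemma SS_sub d : forall X : fmod, (fdim X <= d)%N -> P X -> (0 < fdim X)%N ->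
  exists S1 i, [/\ SS S1, is_hom S1 X i & injmx i].
Proof.
elim: d => [|d IH] X Xd PX Xpos; first by move: Xd; rewrite leqNgt Xpos.
case: (Classical_Prop.classic (SS X)) => SX.
  by exists X, 1%:M; split => //; [apply: hom_id | apply: linv_inj (mul1mx _)].
have : ~ (forall K k, P K -> is_hom K X k -> injmx k -> (0 < fdim K)%N -> surjmx k).
  by move=> H; apply: SX; split.
move/Classical_Pred_Type.not_all_ex_not => [K /Classical_Pred_Type.not_all_ex_not [k H]].
have [PK [Hk [Ik [Kpos NS]]]] : P K /\ is_hom K X k /\ injmx k /\ (0 < fdim K)%N /\ ~ surjmx k.
  by apply: Classical_Prop.NNPP => H'; apply: H => PK Hk Ik Kp; apply: Classical_Prop.NNPP => NS; apply: H'.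
have KX := inj_nsurj Ik NS.
have Kd : (fdim K <= d)%N by rewrite -ltnS (leq_trans KX Xd).
have [S1 [i [SS1 Hi Ii]]] := IH K Kd PK Kpos.
exists S1, (k *m i); split => //; [exact: hom_comp Hi Hk | exact: inj_comp].
Qed.

Lemma P_Filt_d d : forall X : fmod, (fdim X <= d)%N -> P X -> Filt X.
Proof.
elim: d => [|d IH] X Xd PX.
  by exists 0%N => /=; apply/eqP; rewrite -leqn0.
case: (posnP (fdim X)) => [X0|Xpos]; first by exists 0%N.
have [S1 [i [SS1 Hi Ii]]] := SS_sub (leqnn _) PX Xpos.
have [PS1 S1pos _] := SS1.
have [C [c Cc]] := cokernel_exists Hi.
have PC := HPcok PS1 PX Hi Cc.
have CX : (fdim C < fdim X)%N.
  case: (Cc) => Hc Sc ci Uc; apply: (surj_ninj Sc) => Ic.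
  have i0 : i = 0 by apply: (inj_cancel Ic); rewrite ci mulmx0.
  by move: Ii; rewrite i0 => /inj0 E; move: S1pos; rewrite E.
have Cd : (fdim C <= d)%N by rewrite -ltnS (leq_trans CX Xd).
have [m Fm] := IH C Cd PC.
by exists m.+1, S1, C, i, c; split => //; apply: ses_of_cok.
Qed.

Lemma P_Filt (X : fmod) : P X -> Filt X.
Proof. exact: P_Filt_d (leqnn _). Qed.
End Ringel.
Section Transport.
Variables (F : fieldType) (Gam Lam : falgType F) (phi : {lrmorphism Gam -> Lam}).
Hypothesis Hphi : forall y : Lam, exists x : Gam, phi x = y.

Lemma ex_pre (y : Lam) : exists x : Gam, phi x == y.
Proof. by have [x Hx] := Hphi y; exists x; apply/eqP. Qed.
Definition pre (y : Lam) : Gam := xchoose (ex_pre y).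
Lemma preP y : phi (pre y) = y.
Proof. exact/eqP/(xchooseP (ex_pre y)). Qed.

Definition Qk (X : fmod Gam) := forall a, phi a = 0 -> fact X a = 0.

Lemma Qk_eq (X : fmod Gam) a b : Qk X -> phi a = phi b -> fact X a = fact X b.
Proof.
move=> HX E; apply/eqP; rewrite -subr_eq0 -factB; apply/eqP; apply: HX.
by rewrite rmorphB; apply/eqP; rewrite subr_eq0; apply/eqP; exact: E.
Qed.

Section LamOf.
Variables (X : fmod Gam) (HX : Qk X).
Lemma lamOf_lin : linear (fun y => fact X (pre y)).
Proof.
move=> k y z /=; rewrite -factZ -factD; apply: Qk_eq => //.
by rewrite linearP !preP; congr (_ *: _ + _); symmetry; apply: preP.
Qed.
Lemma lamOf_mul y z : fact X (pre (y * z)) = fact X (pre y) *m fact X (pre z).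
Proof.
rewrite -fact_mul; apply: Qk_eq => //; rewrite rmorphM.
by apply: etrans (preP _) _; congr (_ * _); symmetry; apply: preP.
Qed.
Lemma lamOf_one : fact X (pre 1) = 1%:M.
Proof.
rewrite -(fact_one X); apply: Qk_eq => //; rewrite rmorph1.
exact: preP.
Qed.
Definition lamOf : fmod Lam := @FMod F Lam (fdim X) _ lamOf_lin lamOf_mul lamOf_one.
End LamOf.

Lemma hom_lam (X Y : fmod Gam) (HX : Qk X) (HY : Qk Y) f :
  is_hom X Y f -> is_hom (lamOf HX) (lamOf HY) f.
Proof. by move=> Hf y; apply: Hf. Qed.

Lemma Qk_inj (K X : fmod Gam) k : is_hom K X k -> injmx k -> Qk X -> Qk K.
Proof.
move=> Hk Ik HX a Ha; apply: (inj_cancel Ik).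
by rewrite Hk HX // mul0mx mulmx0.
Qed.
Lemma Qk_surj (Y C : fmod Gam) c : is_hom Y C c -> surjmx c -> Qk Y -> Qk C.
Proof.
move=> Hc Sc HY a Ha; apply: (surj_cancel Sc).
by rewrite -Hc HY // mulmx0 mul0mx.
Qed.

Variable V : subcat Lam.
Hypothesis HV : wide V.

Definition Vp : subcat Gam := fun X => exists HX : Qk X, V (lamOf HX).

Lemma Vp_ker : kernel_closed Vp.
Proof.
move=> X Y f [HX VX] [HY VY] Hf K k Kk.
case: (Kk) => Hk Ik fk Uk.
have HK := Qk_inj Hk Ik HX.
exists HK; case: HV => _ Vk _ _.
apply: (Vk (lamOf HX) (lamOf HY) f VX VY (hom_lam HX HY Hf) (lamOf HK) k).
by split => //; apply: hom_lam.
Qed.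

Lemma Vp_cok : cokernel_closed Vp.
Proof.
move=> X Y f [HX VX] [HY VY] Hf C c Cc.
case: (Cc) => Hc Sc cf Uc.
have HC := Qk_surj Hc Sc HY.
exists HC; case: HV => _ _ Vc _.
apply: (Vc (lamOf HX) (lamOf HY) f VX VY (hom_lam HX HY Hf) (lamOf HC) c).
by split => //; apply: hom_lam.
Qed.

Lemma Vp_ext (X E Y : fmod Gam) i p : short_exact X E Y i p -> Qk E -> Vp X -> Vp Y -> Vp E.
Proof.
move=> ses HE [HX VX] [HY VY]; exists HE.
case: HV => _ _ _ Ve; apply: (Ve (lamOf HX) (lamOf HE) (lamOf HY) i p _ VX VY).
by case: ses => Hi Hp Ii Sp ex; split => //; apply: hom_lam.
Qed.

Lemma Vp_zero (Y0 : fmod Lam) : V Y0 -> forall X : fmod Gam, fdim X = 0%N -> Vp X.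
Proof.
move=> VY0 X X0.
have HX : Qk X by move=> a _; exact: (mx0dim X0 _ _).
exists HX.
have [K [k Kk]] := kernel_exists (hom_id Y0).
case: HV => Viso Vk _ _.
have VK := Vk _ _ _ VY0 VY0 (hom_id Y0) _ _ Kk.
case: Kk => Hk Ik fk _.
have k0 : k = 0 by move: fk; rewrite mul1mx.
have K0 : fdim K = 0%N by move: Ik; rewrite k0 => /inj0.
apply: (Viso K) => //.
exists 0, 0; split.
- by move=> a; apply: mx0dim.
- by move=> a; apply: mx0dimr.
- exact: mx0dim.
- exact: mx0dim.
Qed.

Lemma Filt_Vp (Y0 : fmod Lam) : V Y0 -> forall n (X : fmod Gam), filtn Vp n X -> Qk X -> Vp X.
Proof.
move=> VY0; elim=> [|n IH] X FX HX; first by apply: Vp_zero VY0 X FX.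
case: FX => S1 [X' [i [p [[VS1 _ _] ses FX']]]].
have HX' : Qk X' by case: (ses) => _ Hp _ Sp _; apply: Qk_surj Hp Sp HX.
exact: Vp_ext ses HX VS1 (IH _ FX' HX').
Qed.

Lemma Qk_res (Y : fmod Lam) : Qk (res phi Y).
Proof. by move=> a /= ->; apply: fact0. Qed.

Lemma Vp_res (Y : fmod Lam) : Vp (res phi Y) <-> V Y.
Proof.
have iso1 : forall H : Qk (res phi Y), iso (lamOf H) Y.
  move=> H; exists 1%:M, 1%:M; split; rewrite ?mulmx1 //.
    by move=> y /=; rewrite mulmx1 mul1mx preP.
  by move=> y /=; rewrite mulmx1 mul1mx preP.
case: HV => Viso _ _ _; split.
  by case=> H VH; apply: Viso (iso1 H) VH.
move=> VY; exists (Qk_res Y); apply: Viso VY.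
exact: iso_sym.
Qed.

End Transport.
Section Lattice.
Variables (F : fieldType) (A : falgType F).
Local Notation fmod := (@fmod F A).

Lemma wide_cap (W1 W2 : subcat A) : wide W1 -> wide W2 -> wide (capS W1 W2).
Proof.
case=> i1 k1 c1 e1 [i2 k2 c2 e2]; split.
- by move=> X Y XY [H1 H2]; split; [apply: i1 XY H1 | apply: i2 XY H2].
- move=> X Y f [X1 X2] [Y1 Y2] Hf K k Kk; split; [exact: k1 X1 Y1 Hf K k Kk | exact: k2 X2 Y2 Hf K k Kk].
- move=> X Y f [X1 X2] [Y1 Y2] Hf K k Kk; split; [exact: c1 X1 Y1 Hf K k Kk | exact: c2 X2 Y2 Hf K k Kk].
- move=> X E Y i p ses [X1 X2] [Y1 Y2]; split; [exact: e1 ses X1 Y1 | exact: e2 ses X2 Y2].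
Qed.

Lemma widshad_cap (M S1 S2 : subcat A) : widshad M S1 -> widshad M S2 -> widshad M (capS S1 S2).
Proof.
case=> W1 [w1 e1] [W2 [w2 e2]]; exists (capS W1 W2); split; first exact: wide_cap.
move=> X; have := e1 X; have := e2 X; rewrite /capS; tauto.
Qed.

Lemma widshad_le (M S : subcat A) : widshad M S -> subcat_le S M.
Proof. by case=> W [_ e] X /e []. Qed.

Lemma glb_exists (M : subcat A) (Fam : subcat A -> Prop) :
  (forall T, Fam T -> widshad M T) -> exists S, is_glb (widshad M) Fam S.
Proof.
move=> HF.
pose W : subcat A := fun X => forall T W', Fam T -> wide W' -> subcat_eq T (capS W' M) -> W' X.
have wW : wide W.
  split.
  - move=> X Y XY HX T W' FT wW' eT; case: (wW') => wi _ _ _; exact: wi XY (HX T W' FT wW' eT).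
  - move=> X Y f HX HY Hf K k Kk T W' FT wW' eT; case: (wW') => _ wk _ _.
    exact: wk (HX T W' FT wW' eT) (HY T W' FT wW' eT) Hf K k Kk.
  - move=> X Y f HX HY Hf K k Kk T W' FT wW' eT; case: (wW') => _ _ wc _.
    exact: wc (HX T W' FT wW' eT) (HY T W' FT wW' eT) Hf K k Kk.
  - move=> X E Y i p ses HX HY T W' FT wW' eT; case: (wW') => _ _ _ we.
    exact: we ses (HX T W' FT wW' eT) (HY T W' FT wW' eT).
exists (capS W M); split.
- by exists W; split.
- move=> T FT X [HX MX]; have [W' [wW' eT]] := HF T FT.
  by apply/(eT X); split => //; apply: (HX T W' FT wW' eT).
- move=> U DU HU X UX; split; last exact: widshad_le DU X UX.
  by move=> T W' FT wW' eT; case: (eT X) => H _; case: (H (HU T FT X UX)).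
Qed.

Lemma cl_widshad (M : subcat A) : complete_lattice (widshad M).
Proof.
move=> Fam HF; split; last exact: glb_exists.
pose UB := fun U => widshad M U /\ forall T, Fam T -> subcat_le T U.
have [L [DL lbL grL]] := glb_exists (fun U (H : UB U) => proj1 H).
exists L; split => //.
- move=> T FT; apply: grL; first exact: HF.
  by move=> U [_ HU]; apply: HU.
- by move=> U DU HU; apply: lbL.
Qed.
End Lattice.

Section Res.
Variables (F : fieldType) (Gam Lam : falgType F) (phi : {lrmorphism Gam -> Lam}).
Lemma res_hom (X Y : fmod Lam) f : is_hom X Y f -> is_hom (res phi X) (res phi Y) f.
Proof. by move=> H a; apply: H. Qed.
Lemma res_iso (X Y : fmod Lam) : iso X Y -> iso (res phi X) (res phi Y).
Proof. by case=> f [g [? ? ? ?]]; exists f, g; split => //; apply: res_hom. Qed.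
Lemma res_ker (X Y K : fmod Lam) f k : is_kernel X Y f K k -> is_kernel (res phi X) (res phi Y) f (res phi K) k.
Proof. by case=> ? ? ? ?; split => //; apply: res_hom. Qed.
Lemma res_cok (X Y K : fmod Lam) f k : is_cokernel X Y f K k -> is_cokernel (res phi X) (res phi Y) f (res phi K) k.
Proof. by case=> ? ? ? ?; split => //; apply: res_hom. Qed.
Lemma res_ses (X E Y : fmod Lam) i p : short_exact X E Y i p -> short_exact (res phi X) (res phi E) (res phi Y) i p.
Proof. by case=> ? ? ? ? ?; split => //; apply: res_hom. Qed.

Lemma restrL_wide (M : subcat Gam) (W : subcat Gam) : subcat_le (modL phi) M -> wide W ->
  wide (restrL phi (capS W M)).
Proof.
move=> HM [wi wk wc we].
have MR : forall Y, M (res phi Y) by move=> Y; apply: HM; exists Y; apply: iso_refl.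
split.
- move=> X Y XY [HX _]; split => //; exact: wi (res_iso XY) HX.
- move=> X Y f [HX _] [HY _] Hf K k Kk; split => //; exact: wk HX HY (res_hom Hf) _ _ (res_ker Kk).
- move=> X Y f [HX _] [HY _] Hf K k Kk; split => //; exact: wc HX HY (res_hom Hf) _ _ (res_cok Kk).
- move=> X E Y i p ses [HX _] [HY _]; split => //; exact: we _ _ _ _ _ (res_ses ses) HX HY.
Qed.
End Res.
Lemma wide_eq (F : fieldType) (A : falgType F) (P Q : subcat A) : wide P -> subcat_eq P Q -> wide Q.
Proof.
move=> [wi wk wc we] E; split.
- by move=> X Y XY /E HX; apply/E; apply: wi XY HX.
- by move=> X Y f /E HX /E HY Hf K k Kk; apply/E; apply: wk HX HY Hf K k Kk.
- by move=> X Y f /E HX /E HY Hf K k Kk; apply/E; apply: wc HX HY Hf K k Kk.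
- by move=> X E' Y i p ses /E HX /E HY; apply/E; apply: we ses HX HY.
Qed.

Lemma restrL_wide' (F : fieldType) (Gam Lam : falgType F) (phi : {lrmorphism Gam -> Lam})
  (M S : subcat Gam) : subcat_le (modL phi) M -> widshad M S -> wide (restrL phi S).
Proof.
move=> HM [W [wW eW]]; apply: wide_eq (restrL_wide HM wW) _.
by move=> Y; rewrite /restrL; split => /eW.
Qed.
Unset Implicit Arguments.
Local Close Scope ring_scope.

Theorem lemma7p2 (F : fieldType) (Gam Lam : falgType F)
  (phi : {lrmorphism Gam -> Lam}) (M : subcat Gam) :
  (forall y : Lam, exists x : Gam, phi x = y) ->
  iso_closed M ->
  subcat_le (modL phi) M ->
  [/\ complete_lattice (widshad M),
      meet_map (@wide F Gam) (widshad M) (fun W => capS W M),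
      surj_map (@wide F Gam) (widshad M) (fun W => capS W M),
      meet_map (widshad M) (@wide F Lam) (restrL phi)
    & surj_map (widshad M) (@wide F Lam) (restrL phi)].
Proof.
move=> Hphi HMiso HM.
have MR : forall Y, M (res phi Y) by move=> Y; apply: HM; exists Y; apply: iso_refl.
split.
- exact: cl_widshad.
- split; first by move=> x wx; exists x; split.
  move=> x y m wx wy [wm lb gr].
  have xym : subcat_le (capS x y) m.
    apply: gr; first exact: wide_cap.
    by move=> T [->|->] X [].
  split.
  + by exists m; split.
  + move=> T [->|->] X [HX MX]; split => //.
      exact: lb x (or_introl erefl) X HX.
    exact: lb y (or_intror erefl) X HX.
  + move=> U DU HU X UX.
    have [Xx MX] := HU _ (or_introl erefl) X UX.
    have [Xy _] := HU _ (or_intror erefl) X UX.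
    by split => //; apply: xym.
- move=> S [W [wW eW]]; exists W; split => // X; split; [by move/eW | by move=> H; apply/eW].
- split; first by move=> S DS; apply: restrL_wide' HM DS.
  move=> x y m wx wy [Dm lb gr].
  have xym : subcat_le (capS x y) m.
    apply: gr; first exact: widshad_cap.
    by move=> T [->|->] X [].
  split.
  + exact: restrL_wide' HM Dm.
  + by move=> T [->|->] Y H; [apply: lb x (or_introl erefl) _ H | apply: lb y (or_intror erefl) _ H].
  + move=> U wU HU Y UY; apply: xym; split.
      exact: HU _ (or_introl erefl) Y UY.
    exact: HU _ (or_intror erefl) Y UY.
- move=> V wV; case: (Classical_Prop.classic (exists Y0, V Y0)) => [[Y0 VY0]|NV].
    have HPk := Vp_ker (Hphi := Hphi) wV.
    have HPc := Vp_cok (Hphi := Hphi) wV.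
    exists (capS (Filt (Vp Hphi V)) M); split.
      by exists (Filt (Vp Hphi V)); split => //; apply: Filt_wide HPk HPc.
    move=> Y; rewrite /restrL /capS; split.
      case=> [[n Fn] _]; apply/(Vp_res Hphi wV).
      exact: (Filt_Vp wV VY0 Fn (@Qk_res _ _ _ phi Y)).
    move=> VY; split => //; apply: (P_Filt HPc); exact/(Vp_res Hphi wV).
  exists (fun _ => False); split.
    exists (fun _ => False); split; last by move=> X; split => // [[]].
    by split.
  by move=> Y; split => // VY; apply: NV; exists Y.
Qed.
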